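(* Let $\mathscr P$ be a polymatroid and let $\mathrm{Stal}_{\mathscr P}$ be computed with respect to any lexicographic order on $\mathbb N^p$. Then $\mathrm{Stal}_{\mathscr P}(\mathbf t)=\text{M\''ob}_{\mathscr P}(\mathbf t)$.
   Context: Notation: $[p]=\{1,\dots,p\}$; $\mathbf e_i$ is the $i$th standard basis vector; $\mathbf e_J=\sum_{j\in J}\mathbf e_j$; $|\mathbf n|=n_1+\dots+n_p$; $\le$ is componentwise, $<$ its strict version; $\mathbf t^{\mathbf n}=t_1^{n_1}\cdots t_p^{n_p}$. Polymatroid: a finite set $\mathscr P\subseteq\mathbb N^p$ that is homogeneous (all $\mathbf u\in\mathscr P$ have the same $|\mathbf u|$, the rank $\mathrm{rk}(\mathscr P)$) and M-convex: for all $\mathbf u,\mathbf v\in\mathscr P$ and $i$ with $u_i>v_i$ there is $j$ with $u_j<v_j$ and $\mathbf u-\mathbf e_i+\mathbf e_j\in\mathscr P$. $I(\mathscr P)=\{\mathbf n\in\mathbb N^p:\mathbf n\le\mathbf u\text{ for some }\mathbf u\in\mathscr P\}$. Lexicographic orders: given a total ordering $\sigma_1,\dots,\sigma_p$ of $[p]$, $\mathbf u\prec\mathbf v$ iff $\mathbf u\neq\mathbf v$ and at the first index (in the order $\sigma_1,\sigma_2,\dots$) where they differ, $\mathbf u$ has the smaller entry. Stalactites: for $\mathbf u\in\mathscr P$, $V\subseteq\mathscr P$, $L(\mathbf u;V)=\{\ell\in[p]:\mathbf u-\mathbf e_\ell+\mathbf e_j\in V\text{ for some }j\}$, $\mathrm{St}(\mathbf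 u;V)=\{\mathbf u-\mathbf e_J:J\subseteq L(\mathbf u;V)\}$. With $\mathscr P=\{\mathbf a_1\prec\dots\prec\mathbf a_r\}$, $c_{\mathbf n}(\mathscr P)$ is the number of $k$ with $\mathbf n\in\mathrm{St}(\mathbf a_k;\{\mathbf a_1,\dots,\mathbf a_{k-1}\})$; $\mathrm{Stal}_{\mathscr P}(\mathbf t)=\sum_{\mathbf n\in I(\mathscr P)}(-1)^{\mathrm{rk}(\mathscr P)-|\mathbf n|}c_{\mathbf n}(\mathscr P)\mathbf t^{\mathbf n}$. M\''obius polynomial: $P$ is the poset on $I(\mathscr P)\sqcup\{\hat1\}$ (componentwise order on $I(\mathscr P)$, $\hat1$ a new maximum), $\mu_P(\mathbf m,\mathbf m)=1$, $\mu_P(\mathbf m,\mathbf n)=-\sum_{\mathbf m\le\mathbf a<\mathbf n}\mu_P(\mathbf m,\mathbf a)$ for $\mathbf m<\mathbf n$; $\mu_{\mathscr P}(\mathbf n)=-\mu_P(\mathbf n,\hat1)$; $\text{M\''ob}_{\mathscr P}(\mathbf t)=\sum_{\mathbf n\in I(\mathscr P)}\mu_{\mathscr P}(\mathbf n)\mathbf t^{\mathbf n}$. *)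

(* Defs.v *)
From HB Require Import structures.
From mathcomp Require Import all_boot all_order all_algebra all_fingroup.
From mathcomp Require Import finmap.
From mathcomp Require Import mpoly.

Set Implicit Arguments.
Unset Strict Implicit.
Unset Printing Implicit Defensive.

Import GRing.Theory.
Local Open Scope ring_scope.
Local Open Scope fset_scope.

(* Vectors of N^p are multinomials 'X_{1..p}; |n| is [mdeg n]; the
   componentwise order <= on N^p is [lem] from mpoly. *)

Section Polymatroid.
Variable p : nat.
Implicit Types (u v n : 'X_{1..p}) (P : {fset 'X_{1..p}}).

(* u - e_i + e_j   (only used when u_i > 0, so the truncated
   subtraction is the integer one) *)
Definition shiftv u (i j : 'I_p) : 'X_{1..p} :=
  [multinom (u k - (k == i) + (k == j))%N | k < p].

Definition subJ u (J : {set 'I_p}) : 'X_{1..p} :=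
  [multinom (u k - (k \in J))%N | k < p].

Definition homogeneous P :=
  exists r : nat, forall u, u \in P -> mdeg u = r.

Definition M_convex P :=
  forall u v, u \in P -> v \in P -> forall i : 'I_p, (v i < u i)%N ->
    exists j : 'I_p, (u j < v j)%N /\ shiftv u i j \in P.

Definition polymatroid P := homogeneous P /\ M_convex P.

(* the rank: the common value of |u| (for a homogeneous set) *)
Definition rk P : nat := \max_(u <- P) mdeg u.

Definition inI P n : bool := has (fun u => lem n u) P.

(* an explicit enumeration of I(P): the elements of I(P) in the box [0,B]^p *)
Definition boxB P : nat := \max_(u <- P) \max_(i < p) u i.
Definition box (B : nat) : seq 'X_{1..p} :=
  map (fun f : {ffun 'I_p -> 'I_B.+1} => [multinom (nat_of_ord (f i)) | i < p])
      (enum {ffun 'I_p -> 'I_B.+1}).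
Definition IP P : seq 'X_{1..p} := [seq n <- box (boxB P) | inI P n].

(* lexicographic order attached to the total ordering s 0, s 1, ..., s (p-1)
   of [p]: u < v iff at the first index (in that order) where they differ,
   u has the smaller entry. *)
Definition lexlt (s : 'S_p) u v : bool :=
  [exists k : 'I_p,
     [forall k' : 'I_p, (k' < k)%N ==> (u (s k') == v (s k'))]
     && (u (s k) < v (s k))%N].

Definition Lset u (V : pred 'X_{1..p}) : {set 'I_p} :=
  [set l : 'I_p | [exists j : 'I_p, (0 < u l)%N && V (shiftv u l j)]].

Definition inSt u (V : pred 'X_{1..p}) n : bool :=
  [exists J : {set 'I_p}, (J \subset Lset u V) && (n == subJ u J)].

(* c_n(P): number of k with n in St(a_k; {a_1,...,a_{k-1}}), where
   {a_1,...,a_{k-1}} = the elements of P lexicographically smaller than a_k *)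
Definition cn (s : 'S_p) P n : nat :=
  count (fun u => inSt u (fun v => (v \in P) && lexlt s v u) n) P.

Definition Stal (s : 'S_p) P : {mpoly int[p]} :=
  \sum_(n <- IP P)
     (((-1) ^+ (rk P - mdeg n)%N * (cn s P n)%:R : int) *: 'X_[n]).

End Polymatroid.

(* The recursion is by fuel; fuel
   (size s).+1 exceeds the length of any chain in s. *)
Section Moebius.
Variables (T : eqType) (s : seq T) (le : rel T).

Fixpoint mobf (k : nat) (m n : T) : int :=
  if m == n then 1 else
  if k is k'.+1 then
    (if le m n then - \sum_(a <- s | le m a && le a n && (a != n)) mobf k' m a
     else 0)
  else 0.

Definition mobius (m n : T) : int := mobf (size s).+1 m n.
End Moebius.

Section MobPoly.
Variable p : nat.
Implicit Types (P : {fset 'X_{1..p}}).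

(* the poset I(P) ⊔ {1̂}: None is the adjoined maximum 1̂ *)
Definition Phat_le (x y : option 'X_{1..p}) : bool :=
  match x, y with
  | _, None => true
  | None, Some _ => false
  | Some a, Some b => lem a b
  end.

Definition Phat P : seq (option 'X_{1..p}) := None :: map Some (IP P).

Definition muP P (n : 'X_{1..p}) : int :=
  - mobius (Phat P) Phat_le (Some n) None.

Definition Mob P : {mpoly int[p]} :=
  \sum_(n <- IP P) (muP P n *: 'X_[n]).
End MobPoly.

(* Main.v *)
Require Import Defs.
From HB Require Import structures.
From mathcomp Require Import all_boot all_order all_algebra all_fingroup.
From mathcomp Require Import finmap.
From mathcomp Require Import mpoly.
From mathcomp Require Import zify ring lra.
Set Implicit Arguments.
Unset Strict Implicit.
Unset Printing Implicit Defensive.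
Import GRing.Theory.
Local Open Scope ring_scope.
Lemma count_lt_sub (T : eqType) (s : seq T) (P1 P2 : pred T) a :
  (forall x, P1 x -> P2 x) -> a \in s -> P2 a -> ~~ P1 a ->
  (count P1 s < count P2 s)%N.
Proof.
move=> h12; elim: s => //= b s IH; rewrite inE => /orP[/eqP<-|ains] h2 h1.
  rewrite h2 (negbTE h1) /= add0n add1n ltnS.
  by apply: sub_count.
have := IH ains h2 h1; case: (P1 b) (h12 b) => [->//|_]; case: (P2 b) => /=; lia.
Qed.

Section MobGen.
Variables (T : eqType) (s : seq T) (le : rel T).
Hypothesis le_refl : forall x, le x x.
Hypothesis le_trans : forall x y z, le x y -> le y z -> le x z.
Hypothesis le_anti : forall x y, le x y -> le y x -> x = y.

Definition cM (m x : T) : nat := count (fun a => le m a && le a x && (a != x)) s.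

Lemma cM_lt m x a : le m a -> le a x -> a != x -> a \in s -> (cM m a < cM m x)%N.
Proof.
move=> hma hax hne ains; apply: (count_lt_sub (a := a)) => //=.
- move=> y /andP[/andP[hmy hya] hne']; rewrite hmy (le_trans hya hax) /=.
  by apply/eqP=> eyx; subst y; move: hne; rewrite (le_anti hax hya) eqxx.
- by rewrite hma hax hne.
- by rewrite eqxx andbF.
Qed.

Lemma cM_size m x : (cM m x <= size s)%N.
Proof. exact: count_size. Qed.

Lemma mobf_stable k k' m x : (cM m x < k)%N -> (cM m x < k')%N ->
  mobf s le k m x = mobf s le k' m x.
Proof.
elim: k k' x => [|k IH] [|k'] x //= hk hk'.
case: eqP => // _; case: ifP => // hmx; congr (- _).
rewrite big_seq_cond [in RHS]big_seq_cond; apply: eq_bigr => a /andP[ains /andP[/andP[hma hax] hne]].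
have := cM_lt hma hax hne ains => hlt.
apply: IH; lia.
Qed.

Lemma mobius_rec m x : m != x -> le m x ->
  mobius s le m x = - \sum_(a <- s | le m a && le a x && (a != x)) mobius s le m a.
Proof.
move=> hne hmx; rewrite {1}/mobius /= (negbTE hne) hmx; congr (- _).
rewrite big_seq_cond [in RHS]big_seq_cond; apply: eq_bigr => a /andP[ains /andP[/andP[hma hax] hne']].
have := cM_lt hma hax hne' ains; have := cM_size m x => h1 h2.
rewrite /mobius; apply: mobf_stable; lia.
Qed.

Lemma mobius_refl m : mobius s le m m = 1.
Proof. by rewrite /mobius /= eqxx. Qed.

Lemma mobius_sum m x : uniq s -> x \in s -> le m x ->
  \sum_(a <- s | le m a && le a x) mobius s le m a = (m == x)%:R.
Proof.
move=> us xs hmx; case: (eqVneq m x) => [emx|hne]; first subst x.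
  rewrite (eq_bigl (fun a => a == m)); last first.
    move=> a; apply/andP/eqP => [[h1 h2]|->]; [exact: le_anti|by rewrite le_refl].
  rewrite -big_filter (_ : [seq _ <- s | _] = [:: m]); first by rewrite big_seq1 mobius_refl.
  exact: (filter_pred1_uniq us xs).
rewrite big_mkcond (bigD1_seq x) //= hmx le_refl /= mobius_rec //.
rewrite -big_mkcondr /=.
have -> : \sum_(i <- s | [&& i != x, le m i & le i x]) mobius s le m i = \sum_(i <- s | le m i && le i x && (i != x)) mobius s le m i.
  by apply: eq_bigl => i; rewrite andbC.
by rewrite addNr.
Qed.


End MobGen.
Section IPfacts.
Variable p : nat.
Implicit Types (u v n : 'X_{1..p}) (P : {fset 'X_{1..p}}).

Lemma lemP' n u : reflect (forall i, (n i <= u i)%N) (lem n u).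
Proof. exact: forallP. Qed.

Lemma lem_refl' n : lem n n.
Proof. by apply/lemP'. Qed.

Lemma lem_trans' (a b c : 'X_{1..p}) : lem a b -> lem b c -> lem a c.
Proof. move=> /lemP' h1 /lemP' h2; apply/lemP' => i; exact: leq_trans (h1 i) (h2 i). Qed.

Lemma lem_anti' (a b : 'X_{1..p}) : lem a b -> lem b a -> a = b.
Proof. move=> /lemP' h1 /lemP' h2; apply/mnmP => i; by apply/eqP; rewrite eqn_leq h1 h2. Qed.

Lemma Phat_refl (x : option 'X_{1..p}) : Phat_le x x.
Proof. by case: x => //= a; exact: lem_refl'. Qed.

Lemma Phat_trans (x y z : option 'X_{1..p}) : Phat_le x y -> Phat_le y z -> Phat_le x z.
Proof. by case: x; case: y; case: z => //= a b c; exact: lem_trans'. Qed.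

Lemma Phat_anti (x y : option 'X_{1..p}) : Phat_le x y -> Phat_le y x -> x = y.
Proof. by case: x; case: y => //= a b h1 h2; rewrite (lem_anti' h2 h1). Qed.

Lemma box_uniq B : uniq (box p B).
Proof.
rewrite /box map_inj_uniq ?enum_uniq // => f g /mnmP h.
apply/ffunP => i; apply/val_inj; have := h i; by rewrite !mnmE.
Qed.

Lemma IP_uniq P : uniq (IP P).
Proof. exact/filter_uniq/box_uniq. Qed.

Lemma mem_IP P n : (n \in IP P) = inI P n.
Proof.
rewrite mem_filter; apply: andb_idr => /hasP [u uP /lemP' hnu].
apply/mapP; exists [ffun i => inord (n i) : 'I_(boxB P).+1]; first by rewrite mem_enum.
apply/mnmP => i; rewrite mnmE ffunE inordK // ltnS.
apply: leq_trans (hnu i) _; apply: (leq_trans (leq_bigmax (F := fun i => u i) i)).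
rewrite /boxB; exact: (leq_bigmax_seq (F := fun u : 'X_{1..p} => \max_(i < p) u i) u uP).
Qed.

Lemma Phat_uniq P : uniq (Phat P).
Proof.
rewrite /Phat /= map_inj_uniq ?IP_uniq ?andbT; last by move=> a b [].
by apply/mapP => -[].
Qed.

Lemma muP_sum P n :
  muP P n = \sum_(a <- IP P | lem n a) mobius (Phat P) (@Phat_le p) (Some n) (Some a).
Proof.
rewrite /muP (mobius_rec _ (@Phat_trans) (@Phat_anti)) //.
rewrite opprK /Phat big_cons /= big_map; apply: eq_bigl => a.
by rewrite /= !andbT.
Qed.

Lemma Mob_left P n b : b \in IP P -> lem n b ->
  \sum_(a <- IP P | lem n a && lem a b) mobius (Phat P) (@Phat_le p) (Some n) (Some a)
  = (n == b)%:R.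
Proof.
move=> bIP hnb.
have := mobius_sum (@Phat_refl) (@Phat_trans) (@Phat_anti) (m := Some n) (x := Some b) (Phat_uniq P) _ hnb.
rewrite /Phat big_cons /= big_map => ->; last by rewrite inE map_f ?orbT.
by [].
Qed.
End IPfacts.
Section Lex.
Variables (p : nat) (s : 'S_p).
Implicit Types (u v w n : 'X_{1..p}).

Lemma lexltP u v : reflect (exists k : 'I_p,
   (forall k' : 'I_p, (k' < k)%N -> u (s k') = v (s k')) /\ (u (s k) < v (s k))%N)
  (lexlt s u v).
Proof.
apply: (iffP existsP) => [[k /andP[/forallP h1 h2]]|[k [h1 h2]]]; exists k.
  by split=> // k' hk; apply/eqP; exact: (implyP (h1 k') hk).
by rewrite h2 andbT; apply/forallP => k'; apply/implyP => hk; rewrite h1.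
Qed.

Lemma lexlt_irr u : ~~ lexlt s u u.
Proof. by apply/lexltP => -[k [_]]; rewrite ltnn. Qed.

Lemma lexlt_trans u v w : lexlt s u v -> lexlt s v w -> lexlt s u w.
Proof.
move=> /lexltP [k1 [e1 l1]] /lexltP [k2 [e2 l2]]; apply/lexltP.
case: (ltngtP k1 k2) => hk.
- exists k1; split; last by rewrite -(e2 _ hk).
  move=> k' hk'; rewrite e1 // e2 //; exact: ltn_trans hk' hk.
- exists k2; split; last by rewrite (e1 _ hk).
  move=> k' hk'; rewrite e1 ?e2 //; exact: ltn_trans hk' hk.
- have ek : k1 = k2 by apply: val_inj.
  subst k2; exists k1; split; last exact: ltn_trans l1 l2.
  by move=> k' hk'; rewrite e1 ?e2.
Qed.

Lemma lexlt_total u v : u != v -> lexlt s u v || lexlt s v u.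
Proof.
move=> neq.
have [i hi] : exists i, u i != v i.
  case: (pickP (fun i => u i != v i)) => [i hi|h]; first by exists i.
  have euv : u = v by apply/mnmP => j; apply/eqP; move/negbFE: (h j).
  by rewrite euv eqxx in neq.
pose k0 := (s^-1)%g i.
have Pk0 : u (s k0) != v (s k0) by rewrite /k0 permKV.
case: (@arg_minnP _ k0 (fun k : 'I_p => u (s k) != v (s k)) (fun k : 'I_p => nat_of_ord k) Pk0) => k hk hmin.
have heq : forall k' : 'I_p, (k' < k)%N -> u (s k') = v (s k').
  move=> k' hk'; apply/eqP; apply: contraTT hk' => hne; rewrite -leqNgt; exact: hmin.
case: (ltngtP (u (s k)) (v (s k))) => hl.
- by apply/orP; left; apply/lexltP; exists k.
- by apply/orP; right; apply/lexltP; exists k; split=> // k' hk'; rewrite heq.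
- by move: hk; rewrite hl eqxx.
Qed.
End Lex.
Section Main.
Variables (p : nat) (P : {fset 'X_{1..p}}) (s : 'S_p).
Implicit Types (u v w n a : 'X_{1..p}) (J K : {set 'I_p}).

Definition VV u := fun v : 'X_{1..p} => (v \in P) && lexlt s v u.
Definition LL u := Lset u (VV u).

Lemma LL_pos u l : l \in LL u -> (0 < u l)%N.
Proof. by rewrite inE => /existsP [j /andP[]]. Qed.

Lemma subJE u J i : subJ u J i = (u i - (i \in J))%N.
Proof. by rewrite mnmE. Qed.

Lemma shiftvE u i j k : shiftv u i j k = (u k - (k == i) + (k == j))%N.
Proof. by rewrite mnmE. Qed.

Lemma mdeg_subJ u J : J \subset LL u -> (mdeg (subJ u J) + #|J| = mdeg u)%N.
Proof.
move=> hJ; rewrite !mdegE -sum1_card. rewrite [X in (_ + X)%N]big_mkcond /= -big_split /=.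
apply: eq_bigr => i _; rewrite subJE; case hi: (i \in J) => /=.
  by have := LL_pos (subsetP hJ i hi); lia.
by lia.
Qed.

Lemma subJ_inj u J K : J \subset LL u -> K \subset LL u -> subJ u J = subJ u K -> J = K.
Proof.
move=> hJ hK /mnmP h; apply/setP => i; have := h i; rewrite !subJE.
case hiJ: (i \in J); case hiK: (i \in K) => //=.
  by have := LL_pos (subsetP hJ i hiJ); lia.
by have := LL_pos (subsetP hK i hiK); lia.
Qed.

Lemma lem_subJ u J : lem (subJ u J) u.
Proof. by apply/lemP' => i; rewrite subJE leq_subr. Qed.

Lemma lem_subJE n u J : J \subset LL u ->
  lem n (subJ u J) = lem n u && (J \subset [set i | n i < u i]%N).
Proof.
move=> hJ; apply/lemP'/andP => [h|[/lemP' h1 /subsetP h2]].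
  split; first by apply/lemP' => i; have := h i; rewrite subJE; lia.
  apply/subsetP => i hi; rewrite inE; have := h i; rewrite subJE hi.
  by have := LL_pos (subsetP hJ i hi); lia.
move=> i; rewrite subJE; case hi: (i \in J) => /=.
  by have := h2 i hi; rewrite inE; lia.
by have := h1 i; lia.
Qed.

Lemma alt_sum (A : {set 'I_p}) :
  \sum_(J : {set 'I_p} | J \subset A) ((-1 : int) ^+ #|J|) = (A == set0)%:R.
Proof.
case: (set_0Vmem A) => [->|[x hx]].
  rewrite eqxx (eq_bigl (fun J => J == set0)); first by rewrite big_pred1_eq cards0.
  by move=> J; rewrite subset0.
have -> : (A == set0) = false by apply/negbTE/set0Pn; exists x.
pose tog J := if x \in J then J :\ x else x |: J.
have togK : involutive tog.
  move=> J; rewrite /tog; case hxJ: (x \in J).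
    by rewrite !inE eqxx /= setD1K.
  by rewrite setU11 setU1K ?hxJ.
set S := \sum_(J | _) _.
have hS : S = - S.
  rewrite {1}/S (reindex_inj (inv_inj togK)) /= -sumrN; apply: eq_big => J.
    rewrite /tog; case hxJ: (x \in J).
      apply/idP/idP => h; apply/subsetP => y hy.
        by case: (eqVneq y x) => [->//|hyx]; apply: (subsetP h); rewrite !inE hyx.
      by move: hy; rewrite !inE => /andP[_]; apply: (subsetP h).
    apply/idP/idP => h; apply/subsetP => y hy.
      by apply: (subsetP h); rewrite !inE hy orbT.
    by move: hy; rewrite !inE => /orP[/eqP->//|]; apply: (subsetP h).
  move=> _; rewrite /tog; case hxJ: (x \in J).
    by rewrite [in RHS](cardsD1 x) hxJ add1n exprS mulN1r opprK.
  by rewrite cardsU1 hxJ add1n exprS mulN1r.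
by move: hS; lia.
Qed.

Lemma cn_sum a : ((cn s P a)%:R : int) =
  \sum_(u <- P) \sum_(J : {set 'I_p} | J \subset LL u) ((a == subJ u J)%:R : int).
Proof.
rewrite /cn -sum1_count natr_sum big_mkcond /=; apply: eq_bigr => u _.
case: (boolP (inSt u _ a)) => [/existsP [J0 /andP[hJ0 /eqP ->]] | hn].
  rewrite (bigD1 J0) //= eqxx big1 ?addr0 // => J /andP[hJ hne].
  case: eqP => // e; move: hne; by rewrite (subJ_inj hJ0 hJ e) eqxx.
rewrite big1 // => J hJ; case: eqP => // e; case/negP: hn.
by apply/existsP; exists J; rewrite hJ e eqxx.
Qed.
End Main.
Section Key.
Variables (p : nat) (P : {fset 'X_{1..p}}) (s : 'S_p).
Hypothesis hP : polymatroid P.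
Implicit Types (u v w n a : 'X_{1..p}) (J K : {set 'I_p}).

Lemma rkE u : u \in P -> mdeg u = rk P.
Proof.
move=> uP; case: hP => [[r hr] _].
apply/eqP; rewrite eqn_leq; apply/andP; split.
  exact: (leq_bigmax_seq (F := fun u : 'X_{1..p} => mdeg u) u uP).
rewrite /rk; apply/bigmax_leqP_seq => v vP _; by rewrite (hr _ vP) (hr _ uP).
Qed.

Lemma notgood_of_smaller n u v : u \in P -> v \in P -> lem n v -> lexlt s v u ->
  LL P s u :&: [set i | n i < u i]%N != set0.
Proof.
move=> uP vP /lemP' hnv /lexltP [k [e hlt]].
case: hP => _ /(_ u v uP vP (s k) hlt) [j [hj shP]].
have hjk : j != s k by apply/eqP => ejk; move: hj hlt; rewrite ejk; lia.
apply/set0Pn; exists (s k); rewrite !inE; apply/andP; split; last first.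
  by have := hnv (s k); lia.
apply/existsP; exists j; apply/andP; split; first by lia.
rewrite /VV shP /=; apply/lexltP; exists k; split.
  move=> k' hk'; rewrite shiftvE.
  have h1 : (s k' == s k) = false.
    by rewrite (inj_eq (@perm_inj _ s)); apply/negbTE; apply/eqP => ek; move: hk'; rewrite ek ltnn.
  have h2 : (s k' == j) = false.
    apply/negbTE/eqP => ej; move: hj; rewrite -ej (e _ hk'); lia.
  by rewrite h1 h2 /=; lia.
rewrite shiftvE eqxx eq_sym (negbTE hjk) /=; lia.
Qed.

Lemma good_of_min n u : u \in P -> lem n u ->
  (forall v, v \in P -> lem n v -> ~~ lexlt s v u) ->
  LL P s u :&: [set i | n i < u i]%N == set0.
Proof.
move=> uP /lemP' hnu hmin; apply/eqP/setP => l; rewrite !inE.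
apply/negbTE/negP => /andP[/existsP [j /andP[hul /andP[shP hlex]]] hnl].
have : lem n (shiftv u l j).
  apply/lemP' => k; rewrite shiftvE.
  case: (eqVneq k l) => [->|hkl] /=; first by lia.
  by have := hnu k; lia.
move=> hn; have := hmin _ shP hn; by rewrite hlex.
Qed.

Lemma exists_min n u0 : u0 \in P -> lem n u0 ->
  exists u, [/\ u \in P, lem n u & forall v, v \in P -> lem n v -> ~~ lexlt s v u].
Proof.
move=> u0P hu0.
suff: forall k u, u \in P -> lem n u ->
    (count (fun v => lem n v && lexlt s v u) P <= k)%N ->
    exists u, [/\ u \in P, lem n u & forall v, v \in P -> lem n v -> ~~ lexlt s v u].
  by move/(_ _ u0 u0P hu0 (leqnn _)).
elim=> [|k IH] u uP hu hc.
  case: (boolP (has (fun v => lem n v && lexlt s v u) P)) => [hh|hn].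
    by move: hh hc; rewrite has_count; lia.
  exists u; split=> // v vP hv; apply/negP => hvu; case/hasP: hn; exists v => //.
  by rewrite hv hvu.
case: (boolP (has (fun v => lem n v && lexlt s v u) P)) => [/hasP [v vP /andP[hv hvu]]|hn].
  apply: (IH v vP hv); rewrite -ltnS; apply: leq_trans hc.
  apply: (count_lt_sub (a := v)) => //=.
  - by move=> w /andP[-> hwv]; exact: lexlt_trans hwv hvu.
  - by rewrite hv hvu.
  - by rewrite (negbTE (lexlt_irr _ _)) andbF.
exists u; split=> // v vP hv; apply/negP => hvu; case/hasP: hn; exists v => //.
by rewrite hv hvu.
Qed.

Lemma key n : inI P n ->
  \sum_(u <- P) ((lem n u && (LL P s u :&: [set i | n i < u i]%N == set0))%:R : int) = 1.
Proof.
case/hasP => u0 u0P hu0.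
have [um [umP hum hmin]] := exists_min u0P hu0.
rewrite (eq_big_seq (fun u => ((u == um)%:R : int))); last first.
  move=> u uP; case: (eqVneq u um) => [->|hne].
    by rewrite hum good_of_min.
  case: (boolP (lem n u)) => //= hnu.
  case: (boolP (_ == set0)) => //= hg.
  case/orP: (lexlt_total s hne) => hl.
    by have := hmin _ uP hnu; rewrite hl.
  by move: (notgood_of_smaller uP umP hum hl); rewrite hg.
rewrite (bigD1_seq um) //= ?fset_uniq // eqxx big1_seq ?addr0 // => u /andP[hne _].
by rewrite (negbTE hne).
Qed.
End Key.
Lemma sum_pick (T : eqType) (r : seq T) (Pr : pred T) (F : T -> int) x :
  uniq r -> x \in r ->
  \sum_(a <- r | Pr a) F a * (a == x)%:R = (Pr x)%:R * F x.
Proof.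
move=> ur xr; rewrite big_mkcond (bigD1_seq x) //= eqxx big1_seq ?addr0.
  by case: (Pr x); rewrite ?mulr1 ?mul1r ?mul0r.
by move=> a /andP[hne _]; rewrite (negbTE hne) mulr0; case: ifP.
Qed.

Section Final.
Variables (p : nat) (P : {fset 'X_{1..p}}) (s : 'S_p).
Hypothesis hP : polymatroid P.

Definition fS (a : 'X_{1..p}) : int := (-1) ^+ (rk P - mdeg a) * (cn s P a)%:R.

Lemma sumA n : n \in IP P -> \sum_(a <- IP P | lem n a) fS a = 1.
Proof.
move=> nIP.
rewrite (eq_bigr (fun a => \sum_(u <- P) \sum_(J : {set 'I_p} | J \subset LL P s u)
    ((-1) ^+ (rk P - mdeg a) * (a == subJ u J)%:R : int))); last first.
  by move=> a _; rewrite /fS cn_sum big_distrr /=; apply: eq_bigr => u _; rewrite big_distrr.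
rewrite exchange_big /=.
transitivity (\sum_(u <- P) ((lem n u && (LL P s u :&: [set i | n i < u i]%N == set0))%:R : int)); last first.
  by apply: (key s hP); rewrite -mem_IP.
apply: eq_big_seq => u uP.
rewrite exchange_big /=.
rewrite (eq_bigr (fun J : {set 'I_p} => ((lem n u && (J \subset [set i | n i < u i]%N))%:R * (-1) ^+ #|J| : int))); last first.
  move=> J hJ.
  have xIP : subJ u J \in IP P by rewrite mem_IP; apply/hasP; exists u => //; exact: lem_subJ.
  rewrite (sum_pick _ _ (IP_uniq P) xIP) (lem_subJE _ hJ).
  have := mdeg_subJ hJ; rewrite (rkE hP uP) => hd.
  by rewrite (_ : (rk P - mdeg (subJ u J))%N = #|J|); last by lia.
case: (boolP (lem n u)) => hnu /=; last by rewrite big1 // => J _; rewrite mul0r.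
rewrite (eq_bigr (fun J : {set 'I_p} => if J \subset [set i | n i < u i]%N then (-1) ^+ #|J| else 0)); last first.
  by move=> J _; case: ifP; rewrite ?mul1r ?mul0r.
rewrite -big_mkcondr /= (eq_bigl (fun J : {set 'I_p} => J \subset LL P s u :&: [set i | n i < u i]%N)) ?alt_sum //.
by move=> J; rewrite subsetI.
Qed.

End Final.

Theorem mainTheorem8 (p : nat) (P : {fset 'X_{1..p}}) (s : 'S_p) :
  polymatroid P -> Stal s P = Mob P.
Proof.
move=> hP; rewrite /Stal /Mob; apply: eq_big_seq => n nIP; congr (_ *: _).
change (fS P s n = muP P n).
rewrite muP_sum big_seq_cond.
rewrite (eq_bigr (fun a => mobius (Phat P) (@Phat_le p) (Some n) (Some a) *
   \sum_(b <- IP P | lem a b) fS P s b)); last first.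
  by move=> a /andP[aIP _]; rewrite (sumA s hP aIP) mulr1.
rewrite -big_seq_cond.
under eq_bigr do rewrite big_distrr big_mkcond.
rewrite exchange_big /=.
rewrite (eq_big_seq (fun b => ((n == b)%:R * fS P s b : int))); last first.
  move=> b bIP.
  rewrite (eq_bigr (fun a => (if lem a b then mobius (Phat P) (@Phat_le p) (Some n) (Some a) else 0) * fS P s b)); last first.
    by move=> a _; case: ifP; rewrite ?mul0r.
  rewrite -mulr_suml -big_mkcondr /=.
  case: (boolP (lem n b)) => hnb; first by rewrite Mob_left.
  rewrite big_pred0; last first.
    move=> a; apply/negbTE/negP => /andP[h1 h2]; case/negP: hnb; exact: lem_trans' h1 h2.
  have -> : (n == b) = false by apply/negbTE; apply: contraNneq hnb => ->; exact: lem_refl'.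
  by rewrite mul0r.
rewrite (bigD1_seq n) ?IP_uniq //= eqxx mul1r big1_seq ?addr0 //.
by move=> b /andP[hne _]; rewrite eq_sym (negbTE hne) mul0r.
Qed.
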